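(* In the MAD-HTLC game $G(1,\mathrm{red})$ described in the context, $\mathcal{A}$ cannot increase her utility by deviating from the prescribed strategy.
   Context: Blockchain model: $n$ miners; miner $i$ has mining power $\lambda_i>0$, $\sum_i\lambda_i=1$. In each round exactly one miner is chosen, miner $i$ with probability $\lambda_i$, and creates a block containing one transaction of her choice, receiving its fee. An unrelated transaction offering the base fee $f$ is always available. Publishing a transaction reveals its contents (in particular preimages) to everyone. A contract can be redeemed by at most one confirmed transaction. All parties ($\mathcal{A}$, $\mathcal{B}$, miners) are rational and non-myopic with perfect information, with utility the expected tokens owned at the end of the game; miners play best responses. MAD-HTLC: preimages $pre_a,pre_b$ with digests $dig_a=H(pre_a)$, $dig_b=H(pre_b)$, chosen by $\mathcal{B}$; only $\mathcal{B}$ knows $pre_b$; $\mathcal{A}$ knows $pre_a$ only if $\mathcal{B}$ shared it with her. Contracts initiated in block $b_j$ with timeout $T$: MH-Dep ($v^{\mathrm{dep}}$ tokens), redeemable via dep-A (signature of $\mathcal{A}$ and $pre_a$; any block), dep-B (signature of $\mathcal{B}$ and $pre_b$; only at least $T$ blocks after initiation), dep-M (both $pre_a,pre_b$; any block); MH-Col ($v^{\mathrm{col}}$ tokens), redeemable only at least $T$ blocks after initiation via col-B (signature of $\mathcal{B}$) or col-M (both $pre_a,pre_b$). Game: $T$ rounds creating $b_{j+1},\dots,b_{j+T}$; in each round $\mathcal{A},\mathcal{B}$ alternately publish transactions (choosing which, when, and with what fee), then a random miner creates the block. Transactions: $tx^{\mathrm{dep}}_{\mathcal{A}}$ (MH-Dep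 via dep-A, fee $f<f^{\mathrm{dep}}_{\mathcal{A}}<v^{\mathrm{dep}}$); $tx^{\mathrm{dep}}_{\mathcal{B}}$ (MH-Dep via dep-B, fee $f<f^{\mathrm{dep}}_{\mathcal{B}}<v^{\mathrm{dep}}$); $tx^{\mathrm{col}}_{\mathcal{B}}$ (MH-Col via col-B, fee $f<f^{\mathrm{col}}_{\mathcal{B}}<v^{\mathrm{col}}$); $tx^{\mathrm{dc}}_{\mathcal{B}}$ (both, fee $f<f^{\mathrm{dc}}_{\mathcal{B}}<v^{\mathrm{dep}}+v^{\mathrm{col}}$). A miner may include an unrelated transaction (fee $f$), any currently valid published transaction, or, if both preimages were revealed by published transactions, her own transaction redeeming MH-Dep via dep-M (reward $v^{\mathrm{dep}}$, while unredeemed), MH-Col via col-M (reward $v^{\mathrm{col}}$, last round), or both (last round). $G(k,s)$ denotes the subgame just before round $k\in[1,T]$ with MH-Dep redeemable ($s=\mathrm{red}$) or already redeemed; the full game is $G(1,\mathrm{red})$. Prescribed strategies: if $\mathcal{A}$ knows $pre_a$ she publishes $tx^{\mathrm{dep}}_{\mathcal{A}}$ within the first $T-1$ rounds; otherwise she publishes nothing. $\mathcal{B}$ waits until block $b_{j+T-1}$ is created; if $\mathcal{A}$ has not published $tx^{\mathrm{dep}}_{\mathcal{A}}$ he publishes $tx^{\mathrm{dc}}_{\mathcal{B}}$, otherwise he publishes $tx^{\mathrm{col}}_{\mathcal{B}}$. *)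

(* Defs.v *)
From HB Require Import structures.
From mathcomp Require Import all_boot all_order all_algebra.
Set Implicit Arguments. Unset Strict Implicit. Unset Printing Implicit Defensive.
Import Order.TTheory GRing.Theory Num.Theory.
Local Open Scope ring_scope.

Inductive btx := BDep | BCol | BDc.

(* Possible contents of a block created by the selected miner:
   unrelated transaction (fee f), one of the published transactions
   tx^dep_A, tx^dep_B, tx^col_B, tx^dc_B, or the miner's own
   dep-M / col-M / dep-M+col-M redemption. *)
Inductive mact :=
  MUnrel | MTxA | MTxDepB | MTxCol | MTxDc | MDepM | MColM | MBothM.

Record event (n : nat) := Event {
  ev_pubA : bool;
  ev_pubB : option btx;
  ev_miner : 'I_n;
  ev_act : mact }.

Record state := State {
  pubA : bool; pubBdep : bool; pubBcol : bool; pubBdc : bool;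
  depRed : bool; colRed : bool }.

Definition init_state := State false false false false false false.

Definition publishA (b : bool) (s : state) : state :=
  State (pubA s || b) (pubBdep s) (pubBcol s) (pubBdc s) (depRed s) (colRed s).

Definition publishB (o : option btx) (s : state) : state :=
  match o with
  | None => s
  | Some BDep => State (pubA s) true (pubBcol s) (pubBdc s) (depRed s) (colRed s)
  | Some BCol => State (pubA s) (pubBdep s) true (pubBdc s) (depRed s) (colRed s)
  | Some BDc => State (pubA s) (pubBdep s) (pubBcol s) true (depRed s) (colRed s)
  end.

Definition redeems_dep (a : mact) : bool :=
  match a with MTxA | MTxDepB | MTxDc | MDepM | MBothM => true | _ => false end.
Definition redeems_col (a : mact) : bool :=
  match a with MTxCol | MTxDc | MColM | MBothM => true | _ => false end.

Definition confirm (a : mact) (s : state) : state :=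
  State (pubA s) (pubBdep s) (pubBcol s) (pubBdc s)
        (depRed s || redeems_dep a) (colRed s || redeems_col a).

Definition step_state (n : nat) (s : state) (e : event n) : state :=
  confirm (ev_act e) (publishB (ev_pubB e) (publishA (ev_pubA e) s)).

Definition state_of (n : nat) (h : seq (event n)) : state :=
  foldl (@step_state n) init_state h.

(* Parameters of the game.  knowsA: whether A knows pre_a. *)
Record params (R : realFieldType) (n : nat) := Params {
  lam : 'I_n -> R;      (* mining powers *)
  fee : R;
  vdep : R; vcol : R;
  fAdep : R; fBdep : R; fBcol : R; fBdc : R;
  T : nat;              (* timeout = number of rounds *)
  knowsA : bool }.

Definition valid_params (R : realFieldType) (n : nat) (P : params R n) : Prop :=
  (forall i, 0 < lam P i) /\
  (\sum_(i < n) lam P i = 1) /\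
  (fee P < fAdep P /\ fAdep P < vdep P) /\
  (fee P < fBdep P /\ fBdep P < vdep P) /\
  (fee P < fBcol P /\ fBcol P < vcol P) /\
  (fee P < fBdc P /\ fBdc P < vdep P + vcol P).

Section Game.
Variables (R : realFieldType) (n : nat) (P : params R n).

(* Is miner action a valid in round k with (post-publication) state s?
   Round T creates block b_{j+T}, the only block in which dep-B, col-B and
   col-M are valid. *)
Definition valid_mact (k : nat) (s : state) (a : mact) : bool :=
  let last := k == T P in
  let both := pubA s && (pubBdep s || pubBdc s) in
  match a with
  | MUnrel => true
  | MTxA => pubA s && ~~ depRed s
  | MTxDepB => [&& pubBdep s, ~~ depRed s & last]
  | MTxCol => [&& pubBcol s, ~~ colRed s & last]
  | MTxDc => [&& pubBdc s, ~~ depRed s, ~~ colRed s & last]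
  | MDepM => both && ~~ depRed s
  | MColM => [&& both, ~~ colRed s & last]
  | MBothM => [&& both, ~~ depRed s, ~~ colRed s & last]
  end.

Definition mreward (a : mact) : R :=
  match a with
  | MUnrel => fee P | MTxA => fAdep P | MTxDepB => fBdep P
  | MTxCol => fBcol P | MTxDc => fBdc P | MDepM => vdep P
  | MColM => vcol P | MBothM => vdep P + vcol P
  end.

(* A decides at the start of each round whether to publish tx^dep_A;
   the selected miner i decides the block content, also seeing A's move of
   the current round (B's move is determined by these). *)
Definition astrat := seq (event n) -> bool.
Definition mstrat := seq (event n) -> bool -> 'I_n -> mact.

Definition presA (r : nat) : astrat := fun h => (size h).+1 == r.

(* Prescribed strategy of B: in round T (after b_{j+T-1} is created)
   publish tx^col_B if tx^dep_A has been published, tx^dc_B otherwise. *)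
Definition B_pub (h : seq (event n)) (s1 : state) : option btx :=
  if (size h).+1 == T P then Some (if pubA s1 then BCol else BDc) else None.

Definition gA (a : mact) (i : 'I_n) : R :=
  if a is MTxA then vdep P - fAdep P else 0.
Definition gM (j : 'I_n) (a : mact) (i : 'I_n) : R :=
  if i == j then mreward a else 0.

Fixpoint cont (sA : astrat) (sg : mstrat) (g : mact -> 'I_n -> R)
    (m : nat) (h : seq (event n)) : R :=
  match m with
  | 0 => 0
  | m'.+1 =>
    let aA := knowsA P && sA h in
    let s1 := publishA aA (state_of h) in
    let b := B_pub h s1 in
    \sum_(i < n) lam P i *
       (g (sg h aA i) i + cont sA sg g m' (rcons h (Event aA b i (sg h aA i))))
  end.

Definition utilA (sA : astrat) (sg : mstrat) : R := cont sA sg gA (T P) [::].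

Definition miner_SPE (sA : astrat) (sg : mstrat) : Prop :=
  forall (h : seq (event n)), (size h < T P)%N -> forall i : 'I_n,
  let aA := knowsA P && sA h in
  let s1 := publishA aA (state_of h) in
  let b := B_pub h s1 in
  let s2 := publishB b s1 in
  let k := (size h).+1 in
  let payoff (a : mact) :=
      mreward a + cont sA sg (gM i) (T P - k) (rcons h (Event aA b i a)) in
  valid_mact k s2 (sg h aA i) /\
  (forall a, valid_mact k s2 a -> payoff a <= payoff (sg h aA i)).

End Game.

(* Main.v *)
Require Import Defs.
From HB Require Import structures.
From mathcomp Require Import all_boot all_order all_algebra.
From mathcomp Require Import lra zify.
Import Order.TTheory GRing.Theory Num.Theory.
Local Open Scope ring_scope.

Lemma cont_S (R : realFieldType) (n : nat) (P : params R n) sA sg g m h :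
  cont P sA sg g m.+1 h =
  \sum_(i < n) lam P i *
    (g (sg h (knowsA P && sA h) i) i +
     cont P sA sg g m (rcons h (Event (knowsA P && sA h)
        (B_pub P h (publishA (knowsA P && sA h) (state_of h))) i
        (sg h (knowsA P && sA h) i)))).
Proof. by []. Qed.

Lemma state_rcons (n : nat) (h : seq (event n)) e :
  state_of (rcons h e) = step_state (state_of h) e.
Proof. by rewrite /state_of foldl_rcons. Qed.

Lemma publishB_fields o s :
  [/\ pubA (publishB o s) = pubA s, depRed (publishB o s) = depRed s &
      colRed (publishB o s) = colRed s].
Proof. by case: o => [[]|]. Qed.

Lemma step_fields {n : nat} s (e : event n) :
  [/\ pubA (step_state s e) = pubA s || ev_pubA e,
      depRed (step_state s e) = depRed s || redeems_dep (ev_act e) &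
      colRed (step_state s e) = colRed s || redeems_col (ev_act e)].
Proof. by case: e => a [[]|] i m. Qed.

Lemma cont_ge0 (R : realFieldType) (n : nat) (P : params R n) sA sg m h :
  valid_params P -> 0 <= cont P sA sg (@gA R n P) m h.
Proof.
move=> [Hl [_ [[H1 H2] _]]].
elim: m h => [|m IH] h //=.
apply: sumr_ge0 => i _; apply: mulr_ge0; first exact: ltW.
apply: addr_ge0 => //; rewrite /gA; case: (sg _ _ _) => //; lra.
Qed.

Lemma cont_red0 (R : realFieldType) (n : nat) (P : params R n) sA sg :
  miner_SPE P sA sg -> forall m h, (size h + m = T P)%N ->
  depRed (state_of h) -> cont P sA sg (@gA R n P) m h = 0.
Proof.
move=> HS; elim=> [|m IH] h Hsz Hd //.
rewrite cont_S big1 // => i _.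
have Hlt : (size h < T P)%N by rewrite -Hsz addnS ltnS leq_addr.
have [Hv _] := HS h Hlt i.
move: Hv; set a := sg _ _ _ => Hv.
rewrite IH; last first.
- rewrite state_rcons; set e := Event _ _ _ _.
  by case: (step_fields (state_of h) e) => _ -> _; rewrite Hd.
- by rewrite size_rcons addSnnS.
rewrite addr0 /gA; case: a Hv => //= ; rewrite ?mulr0 //.
case: (publishB_fields (B_pub P h (publishA (knowsA P && sA h) (state_of h)))
   (publishA (knowsA P && sA h) (state_of h))) => _ -> _.
by rewrite /= Hd andbF.
Qed.

Lemma cont_le (R : realFieldType) (n : nat) (P : params R n) sA sg :
  valid_params P -> miner_SPE P sA sg -> forall m h, (size h + m = T P)%N ->
  cont P sA sg (@gA R n P) m h <= vdep P - fAdep P.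
Proof.
move=> HP HS; have [Hl [Hs [[H1 H2] _]]] := HP.
elim=> [|m IH] h Hsz /=; first lra.
rewrite -[leRHS]mul1r -Hs mulr_suml; apply: ler_sum => i _.
apply: ler_wpM2l; first exact: ltW.
have Hsz' : (size (rcons h (Event (knowsA P && sA h)
        (B_pub P h (publishA (knowsA P && sA h) (state_of h))) i
        (sg h (knowsA P && sA h) i))) + m = T P)%N by rewrite size_rcons addSnnS.
case Ea: (sg h (knowsA P && sA h) i) Hsz' => [|||||||] Hsz' /=;
  rewrite ?add0r ?IH //.
rewrite cont_red0 ?addr0 //.
rewrite state_rcons; set e := Event _ _ _ _.
by case: (step_fields (state_of h) e) => _ -> _; rewrite /e /= orbT.
Qed.

Lemma cont_noA (R : realFieldType) (n : nat) (P : params R n) sA sg :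
  knowsA P = false -> miner_SPE P sA sg -> forall m h, (size h + m = T P)%N ->
  ~~ pubA (state_of h) -> cont P sA sg (@gA R n P) m h = 0.
Proof.
move=> HK HS; elim=> [|m IH] h Hsz Hd //.
rewrite cont_S big1 // => i _.
have Hlt : (size h < T P)%N by rewrite -Hsz addnS ltnS leq_addr.
have [Hv _] := HS h Hlt i.
move: Hv; rewrite HK /=; set a := sg _ _ _ => Hv.
rewrite IH; last first.
- rewrite state_rcons; set e := Event _ _ _ _.
  by case: (step_fields (state_of h) e) => -> _ _; rewrite orbF.
- by rewrite size_rcons addSnnS.
rewrite addr0 /gA; case: a Hv => //= ; rewrite ?mulr0 //.
case: (publishB_fields (B_pub P h (publishA false (state_of h)))
   (publishA false (state_of h))) => -> _ _.
by rewrite /= orbF (negbTE Hd).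
Qed.

Lemma lam_le1 (R : realFieldType) (n : nat) (P : params R n) i :
  valid_params P -> lam P i <= 1.
Proof.
move=> [Hl [Hs _]]; rewrite -Hs (bigD1 i) //= lerDl.
by apply: sumr_ge0 => j _; apply: ltW.
Qed.
Lemma last_round (R : realFieldType) (n : nat) (P : params R n) sA sg h i :
  valid_params P -> miner_SPE P sA sg -> (size h).+1 = T P ->
  pubA (state_of h) -> ~~ colRed (state_of h) -> ~~ pubBdep (state_of h) ->
  ~~ pubBdc (state_of h) ->
  let x := mreward P (sg h (knowsA P && sA h) i) in
  [/\ fBcol P <= x, (~~ depRed (state_of h) -> fAdep P <= x) &
      (x = fee P \/ x = fAdep P \/ x = fBcol P)].
Proof.
move=> HP HS Hk HA HC HBd HBdc /=.
have Hlt : (size h < T P)%N by rewrite -Hk.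
have [Hv Hopt] := HS h Hlt i.
have HB : B_pub P h (publishA (knowsA P && sA h) (state_of h)) = Some BCol.
  by rewrite /B_pub Hk eqxx /= HA.
move: Hv Hopt; rewrite HB Hk subnn /=.
set a := sg _ _ _ => Hv Hopt.
have HC' := negbTE HC; have HBd' := negbTE HBd; have HBdc' := negbTE HBdc.
split.
- have H := Hopt MTxCol; rewrite /= HC' eqxx /= !addr0 in H; exact: H.
- move=> HD; have H := Hopt MTxA; rewrite /= HA (negbTE HD) /= !addr0 in H; exact: H.
- move: Hv; rewrite /valid_mact /= HC' HBd' HBdc' /= andbF.
  by clear Hopt; case: a => //= _; auto.
Qed.

Lemma cont1 (R : realFieldType) (n : nat) (P : params R n) sA sg h i :
  cont P sA sg (gM P i) 1 h = lam P i * mreward P (sg h (knowsA P && sA h) i).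
Proof.
rewrite cont_S (bigD1 i) //= big1 ?addr0 /gM ?eqxx // => j Hj.
by rewrite (negbTE Hj) addr0 mulr0.
Qed.

Lemma gA_TxA (R : realFieldType) (n : nat) (P : params R n) i :
  gA P MTxA i = vdep P - fAdep P.
Proof. by []. Qed.
Lemma gA_Unrel (R : realFieldType) (n : nat) (P : params R n) i :
  gA P MUnrel i = 0.
Proof. by []. Qed.

Lemma pres_ge (R : realFieldType) (n : nat) (P : params R n) r sigma :
  valid_params P -> knowsA P = true -> (0 < r < T P)%N ->
  miner_SPE P (presA r) sigma ->
  forall d h, (size h + d.+2 = T P)%N ->
  pubA (state_of h) = (r <= size h)%N -> ~~ depRed (state_of h) ->
  ~~ colRed (state_of h) -> ~~ pubBdep (state_of h) -> ~~ pubBdc (state_of h) ->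
  vdep P - fAdep P <= cont P (presA r) sigma (@gA R n P) d.+2 h.
Proof.
move=> HP HK /andP[Hr0 HrT] HS; have [Hl [Hs [[H1 H2] [_ [[H5 H6] _]]]]] := HP.
elim=> [|d IH] h Hsz HA HD HC HBd HBdc.
all: rewrite cont_S -[leLHS]mul1r -Hs mulr_suml; apply: ler_sum => i _.
all: apply: ler_wpM2l; first exact: ltW.
all: have HBn : forall s, B_pub P h s = None by move=> s; rewrite /B_pub ifF //; apply/eqP; lia.
all: rewrite HBn HK andTb.
all: have Hlt : (size h < T P)%N by lia.
all: have [Hv Hopt] := HS h Hlt i.
all: move: Hv Hopt; rewrite HBn HK andTb => Hv Hopt.
all: have Hk : ((size h).+1 == T P) = false by apply/eqP; lia.
all: set a := sigma h _ i.
all: have Hv' := Hv.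
all: rewrite /valid_mact /= Hk (negbTE HD) (negbTE HBd) (negbTE HBdc) /= ?andbF in Hv'.
all: rewrite /a; case Ea: (sigma h (presA r h) i) Hv' => // Hv'; rewrite ?gA_TxA ?gA_Unrel.
all: try by rewrite lerDl cont_ge0.
- (* last-but-one round: the miner must include tx_A *)
  exfalso.
  have Hrk : (r <= (size h).+1)%N by lia.
  have HAt : pubA (state_of h) || presA r h
    by move: Hrk; rewrite HA /presA leq_eqVlt ltnS eq_sym orbC.
  have VA : valid_mact P (size h).+1
     (publishB None (publishA (presA r h) (state_of h))) MTxA
    by rewrite /valid_mact /= HAt (negbTE HD).
  have H := Hopt MTxA VA.
  have E1 : (T P - (size h).+1 = 1)%N by rewrite -Hsz addnS subSS addKn.
  rewrite E1 !cont1 Ea in H.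
  set hA := rcons h _ in H; set hU := rcons h _ in H.
  have szA : (size hA).+1 = T P by rewrite size_rcons -Hsz addn2.
  have szU : (size hU).+1 = T P by rewrite size_rcons -Hsz addn2.
  have A1 : pubA (state_of hA) by rewrite /hA state_rcons /= HAt.
  have A2 : ~~ colRed (state_of hA) by rewrite /hA state_rcons /= orbF.
  have A3 : ~~ pubBdep (state_of hA) by rewrite /hA state_rcons /=.
  have A4 : ~~ pubBdc (state_of hA) by rewrite /hA state_rcons /=.
  have U1 : pubA (state_of hU) by rewrite /hU state_rcons /= HAt.
  have U2 : ~~ colRed (state_of hU) by rewrite /hU state_rcons /= orbF.
  have U3 : ~~ pubBdep (state_of hU) by rewrite /hU state_rcons /=.
  have U4 : ~~ pubBdc (state_of hU) by rewrite /hU state_rcons /=.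
  have U5 : ~~ depRed (state_of hU) by rewrite /hU state_rcons /= orbF.
  have [yA _ _] := @last_round _ _ P _ _ hA i HP HS szA A1 A2 A3 A4.
  have [yU1 yU2 yU3] := @last_round _ _ P _ _ hU i HP HS szU U1 U2 U3 U4.
  have yU2' := yU2 U5.
  have L0 := Hl i; have L1 := @lam_le1 _ _ P i HP.
  move: H yA yU1 yU2' yU3 {yU2}.
  move: (mreward P (sigma hA _ i)) (mreward P (sigma hU _ i)) => y x /= H Hy Hx1 Hx2.
  case=> [Ex|[Ex|Ex]]; rewrite Ex in H Hx1 Hx2.
  + lra.
  + have M1 : 0 <= (1 - lam P i) * (fAdep P - fee P) by apply: mulr_ge0; lra.
    have M2 : 0 < lam P i * (y - fee P) by apply: mulr_gt0; lra.
    nra.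
  + have M2 : 0 <= lam P i * (y - fBcol P) by apply: mulr_ge0; lra.
    nra.
- rewrite add0r; apply: IH.
  + by rewrite size_rcons -Hsz addSnnS.
  + by rewrite state_rcons /= HA /presA size_rcons [in RHS]leq_eqVlt ltnS eq_sym orbC.
  + by rewrite state_rcons /= orbF.
  + by rewrite state_rcons /= orbF.
  + by rewrite state_rcons /=.
  + by rewrite state_rcons /=.
Qed.

Theorem lemma5 (R : realFieldType) (n : nat) (P : params R n) (r : nat)
  (sA : astrat n) (sigma sigma' : mstrat n) :
  valid_params P ->
  (0 < r < T P)%N ->
  miner_SPE P (@presA n r) sigma ->
  miner_SPE P sA sigma' ->
  utilA P sA sigma' <= utilA P (@presA n r) sigma.
Proof.
move=> HP Hr HS HS'; have Hr' := Hr; case/andP: Hr' => Hr0 HrT.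
rewrite /utilA.
case HK: (knowsA P).
- apply: le_trans (@cont_le _ _ P sA sigma' HP HS' (T P) [::] _) _ => //.
  have E : ((T P - 2).+2 = T P)%N by lia.
  have := @pres_ge _ _ P r sigma HP HK Hr HS (T P - 2) [::].
  rewrite E; apply => //=.
  by case: r Hr0 {Hr HrT HS}.
- rewrite (@cont_noA _ _ P sA sigma' HK HS' (T P) [::]) //.
  exact: cont_ge0.
Qed.
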